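(* Under the parameter assumptions in the context, the reduced system $\dot x=G(x)$ is strongly monotone on the open orthant $(0,\infty)^4$ with respect to the partial order induced by the orthant cone $C_\sigma=\{x\in\mathbb{R}^4:\sigma_ix_i\ge0\ \forall i\}$ with $\sigma=(-1,1,-1,1)$; that is, for all $t>0$ and all $x_1,x_2\in(0,\infty)^4$ with $x_1-x_2\in C_\sigma$ and $x_1\ne x_2$, one has $\phi_t(x_1)-\phi_t(x_2)\in \mathrm{int}(C_\sigma)$, where $\phi_t$ is the flow of the reduced system.
   Context: All of the following are positive real parameters: $A_s, A_z, E_{34}, E_{200}, E_S, E_Z, \beta_{34}, \beta_{-34}, \beta_{200}, \beta_{-200}, \gamma_s, \gamma_z, c_s, c_{-s}, c_z, c_{-z}, \beta_s, \beta_{s1}, \beta_{s2}, \beta_z, \beta_{z1}, \beta_{z2}, k_s, k_{s1}, k_{s2}, k_{-s}, k_z, k_{z1}, k_{z2}, k_{-z}, \delta_z$. They satisfy $\beta_s<\beta_{s1}<\beta_{s2}$, $\beta_z<\beta_{z1}<\beta_{z2}$, $k_s>k_{s1}>k_{s2}$ and $k_z>k_{z1}>k_{z2}$. For $\rho\in\{s,z\}$ define $e_{\rho1}=\beta_{\rho1}\beta_{\rho2}+(\beta_{\rho1}+\beta_{\rho2})c_{-\rho}+c_{-\rho}^2$, $e_{\rho2}=c_\rho(\beta_{\rho2}+c_{-\rho})$, $e_{\rho3}=\beta_\rho\beta_{\rho2}+\beta_{\rho1}\beta_{\rho2}+\beta_{\rho1}c_{-\rho}$, $\Delta_\rho(\mu)=\beta_{\rho2}c_\rho^2\mu^2+e_{\rho3}c_\rho\mu+e_{\rho1}\beta_\rho$,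 and $N_\rho(\mu)=\dfrac{k_\rho(\beta_{\rho2}c_\rho\mu+e_{\rho1})+k_{\rho1}e_{\rho2}\mu+k_{\rho2}c_\rho^2\mu^2}{\Delta_\rho(\mu)}$ for $\mu\ge 0$. The reduced system $\dot x=G(x)$, $x=(\mu_{34},s,\mu_{200},z)$, is $\dot\mu_{34}=\dfrac{\beta_{34}E_{34}A_sA_z}{(s^2+A_s)(z^2+A_z)}-\beta_{-34}\mu_{34}$, $\dot s=\dfrac{\gamma_sE_SA_s}{s^2+A_s}N_s(\mu_{34})-k_{-s}s$, $\dot\mu_{200}=\dfrac{\beta_{200}E_{200}A_sA_z}{(s^2+A_s)(z^2+A_z)}-\beta_{-200}\mu_{200}$, $\dot z=\delta_z+\dfrac{\gamma_zE_Zs^2z^2}{(s^2+A_s)(z^2+A_z)}N_z(\mu_{200})-k_{-z}z$. *)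

(* Defs.v *)
From Stdlib Require Import Reals Lra.
Open Scope R_scope.

Record params := mkParams {
  A_s : R; A_z : R; E_34 : R; E_200 : R; E_S : R; E_Z : R;
  b_34 : R; b_m34 : R; b_200 : R; b_m200 : R;
  g_s : R; g_z : R; c_s : R; c_ms : R; c_z : R; c_mz : R;
  b_s : R; b_s1 : R; b_s2 : R; b_z : R; b_z1 : R; b_z2 : R;
  k_s : R; k_s1 : R; k_s2 : R; k_ms : R;
  k_z : R; k_z1 : R; k_z2 : R; k_mz : R; d_z : R }.

Definition valid_params (p : params) : Prop :=
  0 < A_s p /\ 0 < A_z p /\ 0 < E_34 p /\ 0 < E_200 p /\ 0 < E_S p /\ 0 < E_Z p /\
  0 < b_34 p /\ 0 < b_m34 p /\ 0 < b_200 p /\ 0 < b_m200 p /\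
  0 < g_s p /\ 0 < g_z p /\ 0 < c_s p /\ 0 < c_ms p /\ 0 < c_z p /\ 0 < c_mz p /\
  0 < b_s p /\ 0 < b_s1 p /\ 0 < b_s2 p /\ 0 < b_z p /\ 0 < b_z1 p /\ 0 < b_z2 p /\
  0 < k_s p /\ 0 < k_s1 p /\ 0 < k_s2 p /\ 0 < k_ms p /\
  0 < k_z p /\ 0 < k_z1 p /\ 0 < k_z2 p /\ 0 < k_mz p /\ 0 < d_z p /\
  b_s p < b_s1 p < b_s2 p /\ b_z p < b_z1 p < b_z2 p /\
  k_s1 p < k_s p /\ k_s2 p < k_s1 p /\ k_z1 p < k_z p /\ k_z2 p < k_z1 p.

(* Generic N_rho built from the rho-specific constants
   (beta, beta1, beta2, c, c_minus, k, k1, k2). *)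
Definition e1 (bt bt1 bt2 c cm : R) : R := bt1 * bt2 + (bt1 + bt2) * cm + cm ^ 2.
Definition e2 (bt bt1 bt2 c cm : R) : R := c * (bt2 + cm).
Definition e3 (bt bt1 bt2 c cm : R) : R := bt * bt2 + bt1 * bt2 + bt1 * cm.
Definition Delta (bt bt1 bt2 c cm mu : R) : R :=
  bt2 * c ^ 2 * mu ^ 2 + e3 bt bt1 bt2 c cm * c * mu + e1 bt bt1 bt2 c cm * bt.
Definition Nfun (bt bt1 bt2 c cm k k1 k2 mu : R) : R :=
  (k * (bt2 * c * mu + e1 bt bt1 bt2 c cm) + k1 * e2 bt bt1 bt2 c cm * mu
   + k2 * c ^ 2 * mu ^ 2) / Delta bt bt1 bt2 c cm mu.

Definition N_s (p : params) (mu : R) : R :=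
  Nfun (b_s p) (b_s1 p) (b_s2 p) (c_s p) (c_ms p) (k_s p) (k_s1 p) (k_s2 p) mu.
Definition N_z (p : params) (mu : R) : R :=
  Nfun (b_z p) (b_z1 p) (b_z2 p) (c_z p) (c_mz p) (k_z p) (k_z1 p) (k_z2 p) mu.

Definition G_mu34 (p : params) (m34 s m200 z : R) : R :=
  b_34 p * E_34 p * A_s p * A_z p / ((s ^ 2 + A_s p) * (z ^ 2 + A_z p)) - b_m34 p * m34.
Definition G_s (p : params) (m34 s m200 z : R) : R :=
  g_s p * E_S p * A_s p / (s ^ 2 + A_s p) * N_s p m34 - k_ms p * s.
Definition G_mu200 (p : params) (m34 s m200 z : R) : R :=
  b_200 p * E_200 p * A_s p * A_z p / ((s ^ 2 + A_s p) * (z ^ 2 + A_z p)) - b_m200 p * m200.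
Definition G_z (p : params) (m34 s m200 z : R) : R :=
  d_z p + g_z p * E_Z p * s ^ 2 * z ^ 2 / ((s ^ 2 + A_s p) * (z ^ 2 + A_z p)) * N_z p m200
  - k_mz p * z.

Definition right_cont (f : R -> R) (a : R) : Prop :=
  forall eps, 0 < eps -> exists delta, 0 < delta /\
    forall t, a <= t < a + delta -> Rabs (f t - f a) < eps.

Definition is_solution (p : params) (T : R) (m34 s m200 z : R -> R) : Prop :=
  right_cont m34 0 /\ right_cont s 0 /\ right_cont m200 0 /\ right_cont z 0 /\
  forall t, 0 < t < T ->
    derivable_pt_lim m34 t (G_mu34 p (m34 t) (s t) (m200 t) (z t)) /\
    derivable_pt_lim s t (G_s p (m34 t) (s t) (m200 t) (z t)) /\
    derivable_pt_lim m200 t (G_mu200 p (m34 t) (s t) (m200 t) (z t)) /\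
    derivable_pt_lim z t (G_z p (m34 t) (s t) (m200 t) (z t)).

Definition in_open_orthant (a b c d : R) : Prop := 0 < a /\ 0 < b /\ 0 < c /\ 0 < d.

Definition in_Csigma (a b c d : R) : Prop := 0 <= - a /\ 0 <= b /\ 0 <= - c /\ 0 <= d.
Definition in_int_Csigma (a b c d : R) : Prop := 0 < - a /\ 0 < b /\ 0 < - c /\ 0 < d.

(* Main.v *)
Require Import Defs.
From Stdlib Require Import Reals Lra Psatz.
Open Scope R_scope.

Lemma dexpw (f : R -> R) (L t df : R) :
  derivable_pt_lim f t df ->
  derivable_pt_lim (fun s => exp (L * s) * f s) t (exp (L * t) * (df + L * f t)).
Proof.
  intro H.
  assert (He : derivable_pt_lim (fun s => exp (L * s)) t (exp (L*t) * L)).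
  { apply (derivable_pt_lim_comp (fun s => L * s) exp t L (exp (L*t))).
    - pose proof (derivable_pt_lim_scal id L t 1 (derivable_pt_lim_id t)) as HH.
      rewrite Rmult_1_r in HH. exact HH.
    - apply derivable_pt_lim_exp. }
  pose proof (derivable_pt_lim_mult _ _ _ _ _ He H) as HM.
  replace (exp (L * t) * (df + L * f t)) with (exp (L * t) * L * f t + exp (L * t) * df) by ring.
  exact HM.
Qed.

Lemma mono_le (g dg : R -> R) (T x y : R) :
  (forall t, 0 < t < T -> derivable_pt_lim g t (dg t) /\ 0 <= dg t) ->
  0 < x -> x <= y -> y < T -> g x <= g y.
Proof.
  intros H hx hxy hy. destruct (Rle_lt_or_eq_dec _ _ hxy) as [hl|he].
  - destruct (MVT_cor2 g dg x y hl) as [c [Hc Hc2]].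
    { intros c Hc. apply H. lra. }
    assert (0 <= dg c) by (apply H; lra). nra.
  - subst; lra.
Qed.

Lemma mono_lt (g dg : R -> R) (T x y : R) :
  (forall t, 0 < t < T -> derivable_pt_lim g t (dg t)) ->
  (forall t, x < t < y -> 0 < dg t) ->
  0 < x -> x < y -> y < T -> g x < g y.
Proof.
  intros H H2 hx hxy hy.
  destruct (MVT_cor2 g dg x y hxy) as [c [Hc Hc2]].
  { intros c Hc. apply H. lra. }
  assert (0 < dg c) by (apply H2; lra). nra.
Qed.

Lemma rc_small (f : R -> R) (m t : R) :
  right_cont f 0 -> m < f 0 -> 0 < t -> exists e, 0 < e < t /\ m < f e.
Proof.
  intros H hm ht. destruct (H (f 0 - m)) as [d [hd Hd]]; [lra|].
  exists (Rmin (d/2) (t/2)). assert (0 < Rmin (d/2) (t/2)) by (apply Rmin_glb_lt; lra).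
  assert (Rmin (d/2) (t/2) <= d/2) by apply Rmin_l.
  assert (Rmin (d/2) (t/2) <= t/2) by apply Rmin_r.
  split; [lra|].
  specialize (Hd (Rmin (d/2) (t/2))). assert (h: 0 <= Rmin (d / 2) (t / 2) < 0 + d) by lra.
  specialize (Hd h). apply Rabs_def2 in Hd. lra.
Qed.

(* positivity via weighted monotonicity *)
Lemma pos_keep (f df : R -> R) (L T : R) :
  right_cont f 0 -> 0 < f 0 ->
  (forall t, 0 < t < T -> derivable_pt_lim f t (df t) /\ 0 <= df t + L * f t) ->
  forall t, 0 < t < T -> 0 < f t.
Proof.
  intros Hrc H0 Hd t ht.
  destruct (rc_small f 0 t Hrc H0 (proj1 ht)) as [e [he hfe]].
  assert (Hm : exp (L*e) * f e <= exp (L*t) * f t).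
  { apply (mono_le (fun s => exp (L * s) * f s) (fun s => exp (L*s) * (df s + L * f s)) T); try lra.
    intros s hs. destruct (Hd s hs) as [h1 h2]. split.
    - apply dexpw; auto.
    - apply Rmult_le_pos; [left; apply exp_pos|lra]. }
  assert (0 < exp (L*e)) by apply exp_pos. assert (0 < exp (L*t)) by apply exp_pos.
  assert (0 < exp (L*e) * f e) by nra. nra.
Qed.

Lemma pos_prop (f df : R -> R) (L T : R) :
  (forall t, 0 < t < T -> derivable_pt_lim f t (df t) /\ 0 < df t + L * f t /\ 0 <= f t) ->
  forall t, 0 < t < T -> 0 < f t.
Proof.
  intros Hd t ht.
  assert (Hm : exp (L*(t/2)) * f (t/2) < exp (L*t) * f t).
  { apply (mono_lt (fun s => exp (L * s) * f s) (fun s => exp (L*s) * (df s + L * f s)) T); try lra.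
    - intros s hs. destruct (Hd s hs) as [h1 h2]. apply dexpw; auto.
    - intros s hs. destruct (Hd s) as [h1 [h2 h3]]; [lra|].
      apply Rmult_lt_0_compat; [apply exp_pos|lra]. }
  assert (0 < exp (L*(t/2))) by apply exp_pos. assert (0 < exp (L*t)) by apply exp_pos.
  destruct (Hd (t/2)) as [_ [_ h3]]; [lra|].
  assert (0 <= exp (L*(t/2)) * f (t/2)) by nra. nra.
Qed.

Lemma Rabs_inv_le (x a : R) : Rabs x <= a -> -a <= x <= a.
Proof. unfold Rabs; destruct (Rcase_abs x); lra. Qed.

Definition phi (x : R) := Rmin x 0 * Rmin x 0.

Lemma phi_quad (x y : R) : Rabs (phi y - phi x - 2 * Rmin x 0 * (y - x)) <= (y - x) * (y - x).
Proof.
  unfold phi. assert (Hs: 0 <= (y-x)*(y-x)) by apply Rle_0_sqr.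
  destruct (Rle_dec x 0) as [hx|hx]; destruct (Rle_dec y 0) as [hy|hy].
  - rewrite (Rmin_left x 0 hx), (Rmin_left y 0 hy).
    replace (y * y - x * x - 2 * x * (y - x)) with ((y-x)*(y-x)) by ring.
    apply Rabs_le; split; lra.
  - rewrite (Rmin_left x 0 hx), (Rmin_right y 0) by lra.
    apply Rabs_le; split; nra.
  - rewrite (Rmin_right x 0), (Rmin_left y 0 hy) by lra.
    apply Rabs_le; split; nra.
  - rewrite (Rmin_right x 0), (Rmin_right y 0) by lra.
    apply Rabs_le; split; nra.
Qed.

Lemma phi_deriv (x : R) : derivable_pt_lim phi x (2 * Rmin x 0).
Proof.
  intros eps heps. exists (mkposreal eps heps). intros h hh hlt. simpl in hlt.
  pose proof (phi_quad x (x+h)) as Hq.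
  replace (x + h - x) with h in Hq by ring.
  replace ((phi (x + h) - phi x) / h - 2 * Rmin x 0) with
    ((phi (x + h) - phi x - 2 * Rmin x 0 * h) / h) by (field; auto).
  unfold Rdiv. rewrite Rabs_mult, Rabs_inv.
  assert (0 < Rabs h) by (apply Rabs_pos_lt; auto).
  apply (Rmult_lt_reg_r (Rabs h)); auto.
  rewrite Rmult_assoc, Rinv_l by lra. rewrite Rmult_1_r.
  assert (h * h = Rabs h * Rabs h).
  { rewrite <- Rabs_mult. rewrite Rabs_right; nra. }
  nra.
Qed.

Lemma key_ineq (ui uj uk p q r L : R) :
  0 <= p <= L -> 0 <= q <= L -> Rabs r <= L ->
  Rmin ui 0 * (p*uj + q*uk + r*ui) <= 3*L*(phi ui + phi uj + phi uk).
Proof.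
  intros hp hq hr. unfold phi.
  assert (hmi: Rmin ui 0 <= 0) by apply Rmin_r.
  assert (hmj: Rmin uj 0 <= uj) by apply Rmin_l.
  assert (hmk: Rmin uk 0 <= uk) by apply Rmin_l.
  assert (hmj0: Rmin uj 0 <= 0) by apply Rmin_r.
  assert (hmk0: Rmin uk 0 <= 0) by apply Rmin_r.
  assert (hii : Rmin ui 0 * ui = Rmin ui 0 * Rmin ui 0).
  { destruct (Rle_dec ui 0). rewrite Rmin_left; auto. rewrite Rmin_right; lra. }
  set (mi := Rmin ui 0) in *. set (mj := Rmin uj 0) in *. set (mk := Rmin uk 0) in *.
  assert (h1 : mi * (p*uj) <= p * (mi*mj)).
  { assert (0 <= (-mi) * (p*(uj-mj))) by (apply Rmult_le_pos; [lra| apply Rmult_le_pos; lra]). lra. }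
  assert (h2 : mi * (q*uk) <= q * (mi*mk)).
  { assert (0 <= (-mi) * (q*(uk-mk))) by (apply Rmult_le_pos; [lra| apply Rmult_le_pos; lra]). lra. }
  assert (hmm1 : 0 <= mi*mj) by (replace (mi*mj) with ((-mi)*(-mj)) by ring; apply Rmult_le_pos; lra).
  assert (hmm2 : 0 <= mi*mk) by (replace (mi*mk) with ((-mi)*(-mk)) by ring; apply Rmult_le_pos; lra).
  assert (hmm3 : 0 <= mi*mi) by apply Rle_0_sqr.
  assert (h3 : p * (mi*mj) <= L * (mi*mj)) by (apply Rmult_le_compat_r; lra).
  assert (h4 : q * (mi*mk) <= L * (mi*mk)) by (apply Rmult_le_compat_r; lra).
  assert (h5 : r * (mi*mi) <= L * (mi*mi)).
  { apply Rabs_inv_le in hr. apply Rmult_le_compat_r; lra. }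
  assert (0 <= mk*mk) by apply Rle_0_sqr. assert (0 <= mj*mj) by apply Rle_0_sqr.
  assert (h6 : mi*mj <= mi*mi + mj*mj).
  { assert (0 <= (mi-mj)*(mi-mj)) by apply Rle_0_sqr. lra. }
  assert (h7 : mi*mk <= mi*mi + mk*mk).
  { assert (0 <= (mi-mk)*(mi-mk)) by apply Rle_0_sqr. lra. }
  assert (0 <= L) by (pose proof (Rabs_pos r); lra).
  assert (L*(mi*mj) <= L*(mi*mi + mj*mj)) by (apply Rmult_le_compat_l; lra).
  assert (L*(mi*mk) <= L*(mi*mi + mk*mk)) by (apply Rmult_le_compat_l; lra).
  replace (mi * (p * uj + q * uk + r * ui)) with (mi*(p*uj) + mi*(q*uk) + r*(mi*ui)) by ring.
  assert (0 <= L*(mj*mj)) by (apply Rmult_le_pos; lra).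
  assert (0 <= L*(mk*mk)) by (apply Rmult_le_pos; lra).
  rewrite hii. lra.
Qed.

Lemma phi_nonneg x : 0 <= phi x.
Proof. unfold phi. apply Rle_0_sqr. Qed.

Lemma phi_small (a b eta : R) : 0 <= a -> Rabs (b - a) < eta -> phi b <= eta * eta.
Proof.
  intros ha hb. apply Rabs_def2 in hb. unfold phi. destruct (Rle_dec b 0).
  - rewrite Rmin_left by lra.
    assert (0 <= -b) by lra. assert (-b <= eta) by lra.
    replace (b*b) with ((-b)*(-b)) by ring. apply Rmult_le_compat; lra.
  - rewrite Rmin_right by lra. assert (0 <= eta) by lra. rewrite Rmult_0_l. apply Rmult_le_pos; lra.
Qed.

Lemma phi_zero x : phi x <= 0 -> 0 <= x.
Proof.
  unfold phi. intro H. destruct (Rle_dec x 0); [|lra].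
  rewrite Rmin_left in H by lra. destruct (Req_dec x 0); [lra|].
  assert (0 < x*x) by (apply Rsqr_pos_lt; auto). lra.
Qed.

Lemma rc_common (f1 f2 f3 f4 : R -> R) (eta t : R) :
  right_cont f1 0 -> right_cont f2 0 -> right_cont f3 0 -> right_cont f4 0 ->
  0 < eta -> 0 < t -> exists e, 0 < e < t /\
   Rabs (f1 e - f1 0) < eta /\ Rabs (f2 e - f2 0) < eta /\ Rabs (f3 e - f3 0) < eta /\ Rabs (f4 e - f4 0) < eta.
Proof.
  intros H1 H2 H3 H4 he ht.
  destruct (H1 eta he) as [d1 [hd1 D1]]. destruct (H2 eta he) as [d2 [hd2 D2]].
  destruct (H3 eta he) as [d3 [hd3 D3]]. destruct (H4 eta he) as [d4 [hd4 D4]].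
  set (e := Rmin (Rmin (Rmin d1 d2) (Rmin d3 d4)) t / 2).
  assert (Hm: 0 < Rmin (Rmin (Rmin d1 d2) (Rmin d3 d4)) t).
  { repeat apply Rmin_glb_lt; auto. }
  pose proof (Rmin_l (Rmin (Rmin d1 d2) (Rmin d3 d4)) t).
  pose proof (Rmin_r (Rmin (Rmin d1 d2) (Rmin d3 d4)) t).
  pose proof (Rmin_l (Rmin d1 d2) (Rmin d3 d4)). pose proof (Rmin_r (Rmin d1 d2) (Rmin d3 d4)).
  pose proof (Rmin_l d1 d2). pose proof (Rmin_r d1 d2). pose proof (Rmin_l d3 d4). pose proof (Rmin_r d3 d4).
  exists e. unfold e. repeat split; try lra.
  - apply D1; lra. - apply D2; lra. - apply D3; lra. - apply D4; lra.
Qed.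

Lemma weak_mono (u1 u2 u3 u4 du1 du2 du3 du4 : R -> R) (L T : R) :
  0 <= L ->
  right_cont u1 0 -> right_cont u2 0 -> right_cont u3 0 -> right_cont u4 0 ->
  0 <= u1 0 -> 0 <= u2 0 -> 0 <= u3 0 -> 0 <= u4 0 ->
  (forall t, 0 < t < T -> derivable_pt_lim u1 t (du1 t) /\ derivable_pt_lim u2 t (du2 t) /\
                          derivable_pt_lim u3 t (du3 t) /\ derivable_pt_lim u4 t (du4 t)) ->
  (forall t, 0 < t < T ->
     let W := phi (u1 t) + phi (u2 t) + phi (u3 t) + phi (u4 t) in
     Rmin (u1 t) 0 * du1 t <= 3*L*W /\ Rmin (u2 t) 0 * du2 t <= 3*L*W /\
     Rmin (u3 t) 0 * du3 t <= 3*L*W /\ Rmin (u4 t) 0 * du4 t <= 3*L*W) ->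
  forall t, 0 < t < T -> 0 <= u1 t /\ 0 <= u2 t /\ 0 <= u3 t /\ 0 <= u4 t.
Proof.
  intros HL R1 R2 R3 R4 P1 P2 P3 P4 HD HB.
  set (W := fun s => phi (u1 s) + phi (u2 s) + phi (u3 s) + phi (u4 s)).
  set (dW := fun s => 2 * Rmin (u1 s) 0 * du1 s + 2 * Rmin (u2 s) 0 * du2 s
                     + 2 * Rmin (u3 s) 0 * du3 s + 2 * Rmin (u4 s) 0 * du4 s).
  assert (HWd : forall s, 0 < s < T -> derivable_pt_lim W s (dW s)).
  { intros s hs. destruct (HD s hs) as [d1 [d2 [d3 d4]]].
    pose proof (derivable_pt_lim_comp _ _ _ _ _ d1 (phi_deriv (u1 s))) as c1.
    pose proof (derivable_pt_lim_comp _ _ _ _ _ d2 (phi_deriv (u2 s))) as c2.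
    pose proof (derivable_pt_lim_comp _ _ _ _ _ d3 (phi_deriv (u3 s))) as c3.
    pose proof (derivable_pt_lim_comp _ _ _ _ _ d4 (phi_deriv (u4 s))) as c4.
    pose proof (derivable_pt_lim_plus _ _ _ _ _ (derivable_pt_lim_plus _ _ _ _ _
                  (derivable_pt_lim_plus _ _ _ _ _ c1 c2) c3) c4) as HH.
    unfold W, dW. exact HH. }
  set (C := 24 * L).
  assert (HWb : forall s, 0 < s < T -> dW s <= C * W s).
  { intros s hs. destruct (HB s hs) as [b1 [b2 [b3 b4]]]. unfold dW, W, C. lra. }
  set (g := fun s => exp ((-C) * s) * (- W s)).
  assert (Hg : forall s, 0 < s < T -> derivable_pt_lim g s (exp ((-C)*s) * (- dW s + (-C) * (- W s)))
                                      /\ 0 <= exp ((-C)*s) * (- dW s + (-C) * (- W s))).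
  { intros s hs. split.
    - apply (dexpw (fun s => - W s)). apply (derivable_pt_lim_opp W). apply HWd; auto.
    - apply Rmult_le_pos. left; apply exp_pos. pose proof (HWb s hs). lra. }
  intros t ht.
  assert (HW0 : W t <= 0).
  { destruct (Rle_dec (W t) 0) as [h|h]; [exact h|exfalso].
    set (eta := Rmin 1 (W t / (8 * exp (C*t)))).
    assert (0 < exp (C*t)) by apply exp_pos.
    assert (heta : 0 < eta). { apply Rmin_glb_lt; [lra|]. apply Rdiv_lt_0_compat; lra. }
    assert (heta1 : eta <= 1) by apply Rmin_l.
    assert (heta2 : eta <= W t / (8 * exp (C*t))) by apply Rmin_r.
    destruct (rc_common u1 u2 u3 u4 eta t R1 R2 R3 R4 heta (proj1 ht)) as [e [he [e1 [e2 [e3 e4]]]]].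
    assert (HWe : W e <= 4 * eta).
    { unfold W.
      pose proof (phi_small _ _ _ P1 e1). pose proof (phi_small _ _ _ P2 e2).
      pose proof (phi_small _ _ _ P3 e3). pose proof (phi_small _ _ _ P4 e4).
      assert (eta * eta <= eta) by (rewrite <- (Rmult_1_r eta) at 3; apply Rmult_le_compat_l; lra).
      lra. }
    assert (Hge : g e <= g t) by (apply (mono_le g (fun s => exp ((-C)*s) * (- dW s + (-C) * (- W s))) T e t); try lra; exact Hg).
    unfold g in Hge.
    assert (Hexp : exp ((-C)*e) <= 1).
    { rewrite <- exp_0. assert (0 <= C) by (unfold C; lra).
      assert (hce : (-C)*e <= 0) by nra.
      destruct (Rle_lt_or_eq_dec _ _ hce) as [hl|hq].
      - left. apply exp_increasing. exact hl.
      - rewrite hq. lra. }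
    assert (0 <= W e) by (unfold W; pose proof (phi_nonneg (u1 e)); pose proof (phi_nonneg (u2 e));
                          pose proof (phi_nonneg (u3 e)); pose proof (phi_nonneg (u4 e)); lra).
    assert (0 < exp ((-C)*e)) by apply exp_pos.
    assert (exp ((-C)*t) * W t <= exp ((-C)*e) * W e) by lra.
    assert (exp ((-C)*e) * W e <= W e) by (rewrite <- (Rmult_1_l (W e)) at 2; apply Rmult_le_compat_r; lra).
    assert (Hk : exp (C*t) * exp ((-C)*t) = 1).
    { rewrite <- exp_plus. replace (C*t + (-C)*t) with 0 by ring. apply exp_0. }
    assert (W t = exp (C*t) * (exp ((-C)*t) * W t)) by (rewrite <- Rmult_assoc, Hk; ring).
    assert (exp (C*t) * (exp ((-C)*t) * W t) <= exp (C*t) * (4*eta)) by (apply Rmult_le_compat_l; lra).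
    assert (exp (C*t) * eta <= exp (C*t) * (W t / (8 * exp (C*t)))) by (apply Rmult_le_compat_l; lra).
    assert (exp (C*t) * (W t / (8 * exp (C*t))) = W t / 8) by (field; lra).
    lra. }
  unfold W in HW0.
  pose proof (phi_nonneg (u1 t)); pose proof (phi_nonneg (u2 t));
  pose proof (phi_nonneg (u3 t)); pose proof (phi_nonneg (u4 t)).
  repeat split; apply phi_zero; lra.
Qed.

Lemma ineq3 (ui uj uk p q r L : R) :
  0 < p -> 0 <= q -> Rabs r <= L -> 0 <= ui -> 0 <= uj -> 0 <= uk ->
  0 <= p*uj + q*uk + r*ui + L*ui /\ (0 < uj -> 0 < p*uj + q*uk + r*ui + L*ui).
Proof.
  intros hp hq hr hi hj hk. apply Rabs_inv_le in hr.
  assert (0 <= (r + L) * ui) by (apply Rmult_le_pos; lra).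
  assert (0 <= q*uk) by (apply Rmult_le_pos; lra).
  assert (0 <= p*uj) by (apply Rmult_le_pos; lra).
  split. nra. intro. assert (0 < p*uj) by (apply Rmult_lt_0_compat; lra). nra.
Qed.

Lemma strong_abs (u1 u2 u3 u4 du1 du2 du3 du4 : R -> R) (L T : R) :
  0 <= L ->
  right_cont u1 0 -> right_cont u2 0 -> right_cont u3 0 -> right_cont u4 0 ->
  0 <= u1 0 -> 0 <= u2 0 -> 0 <= u3 0 -> 0 <= u4 0 ->
  (0 < u1 0 \/ 0 < u2 0 \/ 0 < u3 0 \/ 0 < u4 0) ->
  (forall t, 0 < t < T -> derivable_pt_lim u1 t (du1 t) /\ derivable_pt_lim u2 t (du2 t) /\
                          derivable_pt_lim u3 t (du3 t) /\ derivable_pt_lim u4 t (du4 t)) ->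
  (forall t, 0 < t < T ->
    (exists p q r, 0 < p <= L /\ 0 < q <= L /\ Rabs r <= L /\ du1 t = p*u2 t + q*u4 t + r*u1 t) /\
    (exists p r, 0 < p <= L /\ Rabs r <= L /\ du2 t = p*u1 t + r*u2 t) /\
    (exists p q r, 0 < p <= L /\ 0 < q <= L /\ Rabs r <= L /\ du3 t = p*u2 t + q*u4 t + r*u3 t) /\
    (exists p q r, 0 < p <= L /\ 0 < q <= L /\ Rabs r <= L /\ du4 t = p*u2 t + q*u3 t + r*u4 t)) ->
  forall t, 0 < t < T -> 0 < u1 t /\ 0 < u2 t /\ 0 < u3 t /\ 0 < u4 t.
Proof.
  intros HL R1 R2 R3 R4 P1 P2 P3 P4 Hne HD HS.
  assert (Hw : forall t, 0 < t < T -> 0 <= u1 t /\ 0 <= u2 t /\ 0 <= u3 t /\ 0 <= u4 t).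
  { apply (weak_mono u1 u2 u3 u4 du1 du2 du3 du4 (2*L) T); auto; try lra.
    intros t ht W.
    pose proof (phi_nonneg (u1 t)); pose proof (phi_nonneg (u2 t));
    pose proof (phi_nonneg (u3 t)); pose proof (phi_nonneg (u4 t)).
    assert (HWW : forall a b c, 0 <= a -> 0 <= b -> 0 <= c -> a + b + c <= 2 * W ->
              3*L*(a+b+c) <= 3*(2*L)*W).
    { intros a b c ha hb hc habc. assert (0 <= 3*L) by lra.
      replace (3*(2*L)*W) with (3*L*(2*W)) by ring. apply Rmult_le_compat_l; lra. }
    destruct (HS t ht) as [[p1 [q1 [r1 [h1 [h2 [h3 e1]]]]]] [[p2 [r2 [h4 [h5 e2]]]]
                         [[p3 [q3 [r3 [h6 [h7 [h8 e3]]]]]] [p4 [q4 [r4 [h9 [h10 [h11 e4]]]]]]]]].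
    unfold W in *.
    repeat split.
    - rewrite e1. eapply Rle_trans. apply (key_ineq _ _ _ _ _ _ L); [lra|lra|exact h3]. apply HWW; auto; lra.
    - rewrite e2. replace (p2 * u1 t + r2 * u2 t) with (p2 * u1 t + 0 * u1 t + r2 * u2 t) by ring.
      eapply Rle_trans. apply (key_ineq _ _ _ _ _ _ L); [lra|lra|exact h5]. apply HWW; auto; lra.
    - rewrite e3. eapply Rle_trans. apply (key_ineq _ _ _ _ _ _ L); [lra|lra|exact h8]. apply HWW; auto; lra.
    - rewrite e4. eapply Rle_trans. apply (key_ineq _ _ _ _ _ _ L); [lra|lra|exact h11]. apply HWW; auto; lra. }
  assert (C1 : forall t, 0 < t < T -> derivable_pt_lim u1 t (du1 t) /\ 0 <= du1 t + L * u1 t /\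
                 (0 < u2 t \/ 0 < u4 t -> 0 < du1 t + L * u1 t)).
  { intros t ht. destruct (Hw t ht) as [w1 [w2 [w3 w4]]].
    destruct (HS t ht) as [[p [q [r [h1 [h2 [h3 e]]]]]] _]. destruct (HD t ht) as [d1 [d2 [d3 d4]]].
    split; [assumption|]. rewrite e. split.
    - apply (ineq3 (u1 t) (u2 t) (u4 t) p q r L); auto; lra.
    - intros [h|h].
      + apply (ineq3 (u1 t) (u2 t) (u4 t) p q r L); auto; lra.
      + replace (p * u2 t + q * u4 t + r * u1 t + L * u1 t) with (q * u4 t + p * u2 t + r * u1 t + L * u1 t) by ring.
        apply (ineq3 (u1 t) (u4 t) (u2 t) q p r L); auto; lra. }
  assert (C2 : forall t, 0 < t < T -> derivable_pt_lim u2 t (du2 t) /\ 0 <= du2 t + L * u2 t /\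
                 (0 < u1 t -> 0 < du2 t + L * u2 t)).
  { intros t ht. destruct (Hw t ht) as [w1 [w2 [w3 w4]]].
    destruct (HS t ht) as [_ [[p [r [h1 [h2 e]]]] _]]. destruct (HD t ht) as [d1 [d2 [d3 d4]]].
    split; [assumption|]. rewrite e.
    replace (p * u1 t + r * u2 t + L * u2 t) with (p * u1 t + 0 * u1 t + r * u2 t + L * u2 t) by ring.
    split.
    - apply (ineq3 (u2 t) (u1 t) (u1 t) p 0 r L); auto; lra.
    - intros h. apply (ineq3 (u2 t) (u1 t) (u1 t) p 0 r L); auto; lra. }
  assert (C3 : forall t, 0 < t < T -> derivable_pt_lim u3 t (du3 t) /\ 0 <= du3 t + L * u3 t /\
                 (0 < u2 t \/ 0 < u4 t -> 0 < du3 t + L * u3 t)).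
  { intros t ht. destruct (Hw t ht) as [w1 [w2 [w3 w4]]].
    destruct (HS t ht) as [_ [_ [[p [q [r [h1 [h2 [h3 e]]]]]] _]]]. destruct (HD t ht) as [d1 [d2 [d3 d4]]].
    split; [assumption|]. rewrite e. split.
    - apply (ineq3 (u3 t) (u2 t) (u4 t) p q r L); auto; lra.
    - intros [h|h].
      + apply (ineq3 (u3 t) (u2 t) (u4 t) p q r L); auto; lra.
      + replace (p * u2 t + q * u4 t + r * u3 t + L * u3 t) with (q * u4 t + p * u2 t + r * u3 t + L * u3 t) by ring.
        apply (ineq3 (u3 t) (u4 t) (u2 t) q p r L); auto; lra. }
  assert (C4 : forall t, 0 < t < T -> derivable_pt_lim u4 t (du4 t) /\ 0 <= du4 t + L * u4 t /\
                 (0 < u2 t \/ 0 < u3 t -> 0 < du4 t + L * u4 t)).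
  { intros t ht. destruct (Hw t ht) as [w1 [w2 [w3 w4]]].
    destruct (HS t ht) as [_ [_ [_ [p [q [r [h1 [h2 [h3 e]]]]]]]]]. destruct (HD t ht) as [d1 [d2 [d3 d4]]].
    split; [assumption|]. rewrite e. split.
    - apply (ineq3 (u4 t) (u2 t) (u3 t) p q r L); auto; lra.
    - intros [h|h].
      + apply (ineq3 (u4 t) (u2 t) (u3 t) p q r L); auto; lra.
      + replace (p * u2 t + q * u3 t + r * u4 t + L * u4 t) with (q * u3 t + p * u2 t + r * u4 t + L * u4 t) by ring.
        apply (ineq3 (u4 t) (u3 t) (u2 t) q p r L); auto; lra. }
  assert (K1 : 0 < u1 0 -> forall t, 0 < t < T -> 0 < u1 t).
  { intro h. apply (pos_keep u1 du1 L T R1 h). intros t ht. destruct (C1 t ht) as [a [b _]]; auto. }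
  assert (K2 : 0 < u2 0 -> forall t, 0 < t < T -> 0 < u2 t).
  { intro h. apply (pos_keep u2 du2 L T R2 h). intros t ht. destruct (C2 t ht) as [a [b _]]; auto. }
  assert (K3 : 0 < u3 0 -> forall t, 0 < t < T -> 0 < u3 t).
  { intro h. apply (pos_keep u3 du3 L T R3 h). intros t ht. destruct (C3 t ht) as [a [b _]]; auto. }
  assert (K4 : 0 < u4 0 -> forall t, 0 < t < T -> 0 < u4 t).
  { intro h. apply (pos_keep u4 du4 L T R4 h). intros t ht. destruct (C4 t ht) as [a [b _]]; auto. }
  assert (Q1 : (forall t, 0 < t < T -> 0 < u2 t \/ 0 < u4 t) -> forall t, 0 < t < T -> 0 < u1 t).
  { intro H. apply (pos_prop u1 du1 L T). intros t ht. destruct (C1 t ht) as [a [b c]].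
    repeat split; auto. apply (Hw t ht). }
  assert (Q2 : (forall t, 0 < t < T -> 0 < u1 t) -> forall t, 0 < t < T -> 0 < u2 t).
  { intro H. apply (pos_prop u2 du2 L T). intros t ht. destruct (C2 t ht) as [a [b c]].
    repeat split; auto. apply (Hw t ht). }
  assert (Q3 : (forall t, 0 < t < T -> 0 < u2 t \/ 0 < u4 t) -> forall t, 0 < t < T -> 0 < u3 t).
  { intro H. apply (pos_prop u3 du3 L T). intros t ht. destruct (C3 t ht) as [a [b c]].
    repeat split; auto. apply (Hw t ht). }
  assert (Q4 : (forall t, 0 < t < T -> 0 < u2 t \/ 0 < u3 t) -> forall t, 0 < t < T -> 0 < u4 t).
  { intro H. apply (pos_prop u4 du4 L T). intros t ht. destruct (C4 t ht) as [a [b c]].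
    repeat split; auto. apply (Hw t ht). }
  assert (From2 : (forall t, 0 < t < T -> 0 < u2 t) ->
            forall t, 0 < t < T -> 0 < u1 t /\ 0 < u2 t /\ 0 < u3 t /\ 0 < u4 t).
  { intros H t ht. repeat split.
    - apply Q1; auto. - auto. - apply Q3; auto. - apply Q4; auto. }
  destruct Hne as [h|[h|[h|h]]].
  - apply From2. apply Q2. apply K1. exact h.
  - apply From2. apply K2. exact h.
  - apply From2. apply Q2. apply Q1. intros s hs. right. apply Q4. intros s' hs'. right. apply K3; auto. auto.
  - apply From2. apply Q2. apply Q1. intros s hs. right. apply K4; auto.
Qed.

Lemma div_le_b (a b c : R) : 0 < c -> a <= b * c -> a / c <= b.
Proof.
  intros hc h. unfold Rdiv. apply (Rmult_le_reg_r c); auto.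
  rewrite Rmult_assoc, Rinv_l by lra. lra.
Qed.

Lemma div_nonneg (a b : R) : 0 <= a -> 0 < b -> 0 <= a / b.
Proof. intros. unfold Rdiv. apply Rmult_le_pos; auto. left; apply Rinv_0_lt_compat; auto. Qed.

Lemma prod_le (a b A B : R) : 0 <= a <= A -> 0 <= b <= B -> a * b <= A * B.
Proof. intros [] []. apply Rmult_le_compat; auto. Qed.

Lemma quad_pos (q0 q1 q2 x : R) : 0 < q0 -> 0 <= q1 -> 0 < q2 -> 0 <= x ->
  0 < q0 + q1 * x + q2 * x ^ 2 /\ q0 <= q0 + q1 * x + q2 * x ^ 2 /\ q2 * x^2 <= q0 + q1 * x + q2 * x ^ 2.
Proof.
  intros h0 h1 h2 hx. assert (0 <= q1 * x) by (apply Rmult_le_pos; lra).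
  assert (0 <= q2 * x^2) by (apply Rmult_le_pos; [lra| apply pow2_ge_0]). lra.
Qed.

Lemma quad_inv_bound (q0 q1 q2 x : R) : 0 < q0 -> 0 <= q1 -> 0 < q2 -> 0 <= x ->
  0 < 1 / (q0 + q1 * x + q2 * x ^ 2) <= 1 / q0.
Proof.
  intros h0 h1 h2 hx. destruct (quad_pos q0 q1 q2 x) as [hp [hq _]]; auto.
  split. apply Rdiv_lt_0_compat; lra.
  apply div_le_b; auto. unfold Rdiv. rewrite Rmult_1_l.
  apply (Rmult_le_reg_l q0); auto. rewrite <- Rmult_assoc, Rinv_r by lra. lra.
Qed.

Lemma quad_lin_bound (q0 q1 q2 x : R) : 0 < q0 -> 0 <= q1 -> 0 < q2 -> 0 <= x ->
  0 <= x / (q0 + q1 * x + q2 * x ^ 2) <= 1 / q0 + 1 / q2.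
Proof.
  intros h0 h1 h2 hx. destruct (quad_pos q0 q1 q2 x) as [hp [hq hr]]; auto.
  split. apply div_nonneg; lra.
  apply div_le_b; auto.
  set (Q := q0 + q1 * x + q2 * x ^ 2) in *.
  replace ((1 / q0 + 1 / q2) * Q) with (Q / q0 + Q / q2) by (field; lra).
  assert (1 <= Q / q0). { apply (Rmult_le_reg_r q0); auto. unfold Rdiv. rewrite Rmult_assoc, Rinv_l; lra. }
  assert (x^2 <= Q / q2). { apply (Rmult_le_reg_r q2); auto. unfold Rdiv. rewrite Rmult_assoc, Rinv_l; lra. }
  assert (0 <= Q / q0) by lra. assert (0 <= Q / q2) by (pose proof (pow2_ge_0 x); lra).
  destruct (Rle_dec x 1). lra.
  assert (x <= x^2) by (simpl; nra). lra.
Qed.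

Definition fK (A x : R) := 1 / (x ^ 2 + A).
Definition rhof (A x y : R) := (x + y) / ((x ^ 2 + A) * (y ^ 2 + A)).
Definition Lamf (A : R) := 2 * ((1 / A + 1) * (1 / A)).

Lemma fK_diff (A x y : R) : 0 < A -> fK A y - fK A x = (x - y) * rhof A x y.
Proof.
  intro hA. unfold fK, rhof.
  assert (0 < x^2 + A) by (pose proof (pow2_ge_0 x); lra).
  assert (0 < y^2 + A) by (pose proof (pow2_ge_0 y); lra).
  field. split; lra.
Qed.

Lemma fK_bound (A x : R) : 0 < A -> 0 <= x -> 0 < fK A x <= 1 / A.
Proof.
  intros hA hx. unfold fK. replace (x^2 + A) with (A + 0 * x + 1 * x^2) by ring.
  apply quad_inv_bound; lra.
Qed.

Lemma fK_lin (A x : R) : 0 < A -> 0 <= x -> 0 <= x / (x^2 + A) <= 1 / A + 1.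
Proof.
  intros hA hx. replace (x^2 + A) with (A + 0 * x + 1 * x^2) by ring.
  replace (1 / A + 1) with (1/A + 1/1) by (field; lra).
  apply quad_lin_bound; lra.
Qed.

Lemma rhof_bound (A x y : R) : 0 < A -> 0 < x -> 0 < y -> 0 < rhof A x y <= Lamf A.
Proof.
  intros hA hx hy. 
  assert (0 < x^2 + A) by (pose proof (pow2_ge_0 x); lra).
  assert (0 < y^2 + A) by (pose proof (pow2_ge_0 y); lra).
  split. unfold rhof. apply Rdiv_lt_0_compat. lra. apply Rmult_lt_0_compat; lra.
  replace (rhof A x y) with (x / (x^2+A) * fK A y + fK A x * (y / (y^2 + A)))
    by (unfold rhof, fK; field; lra).
  pose proof (fK_lin A x hA (Rlt_le _ _ hx)). pose proof (fK_lin A y hA (Rlt_le _ _ hy)).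
  pose proof (fK_bound A x hA (Rlt_le _ _ hx)). pose proof (fK_bound A y hA (Rlt_le _ _ hy)).
  assert (x / (x^2+A) * fK A y <= (1/A + 1) * (1/A)) by (apply prod_le; lra).
  assert (fK A x * (y / (y^2 + A)) <= (1/A) * (1/A+1)) by (apply prod_le; lra).
  unfold Lamf. lra.
Qed.

Section NS.
Variables bt bt1 bt2 c cm k k1 k2 : R.
Hypotheses (hbt : 0 < bt) (hbt1 : bt < bt1) (hbt2 : bt1 < bt2) (hc : 0 < c) (hcm : 0 < cm)
  (hk2 : 0 < k2) (hk1 : k2 < k1) (hk : k1 < k).

Definition E1 := e1 bt bt1 bt2 c cm.
Definition E3 := e3 bt bt1 bt2 c cm.
Definition Dl (x : R) := Defs.Delta bt bt1 bt2 c cm x.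
Definition NN (x : R) := Nfun bt bt1 bt2 c cm k k1 k2 x.
Definition r0 := c*E1*(bt2+cm)*(k*bt1 - k1*bt).
Definition r1 := c^2*E1*(k*bt2 - k2*bt).
Definition r2 := c^3*(bt2*(k*bt2+k1*bt2+k1*cm) - k2*E3).
Definition rhoN (x y : R) := (r0 + r1*(x+y) + r2*x*y) / (Dl x * Dl y).
Definition q0 := E1 * bt.
Definition q1 := E3 * c.
Definition q2 := bt2 * c^2.
Definition LamN := r0 * (1/q0) * (1/q0) + 2 * (r1 * ((1/q0 + 1/q2) * (1/q0))) + r2 * ((1/q0+1/q2)*(1/q0+1/q2)).

Lemma E1_pos : 0 < E1.
Proof. unfold E1, e1. assert (0 < bt1*bt2) by (apply Rmult_lt_0_compat; lra).
  assert (0 < (bt1+bt2)*cm) by (apply Rmult_lt_0_compat; lra). assert (0 < cm^2) by (apply pow_lt; lra). lra. Qed.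
Lemma E3_pos : 0 < E3.
Proof. unfold E3, e3. assert (0 < bt*bt2) by (apply Rmult_lt_0_compat; lra).
  assert (0 < bt1*bt2) by (apply Rmult_lt_0_compat; lra). assert (0 < bt1*cm) by (apply Rmult_lt_0_compat; lra). lra. Qed.
Lemma q_pos : 0 < q0 /\ 0 < q1 /\ 0 < q2.
Proof. pose proof E1_pos. pose proof E3_pos. unfold q0, q1, q2. repeat split.
  apply Rmult_lt_0_compat; lra. apply Rmult_lt_0_compat; lra. apply Rmult_lt_0_compat; [lra|apply pow_lt; lra]. Qed.
Lemma Dl_eq x : Dl x = q0 + q1 * x + q2 * x^2.
Proof. unfold Dl, Defs.Delta, q0, q1, q2, E1, E3. ring. Qed.
Lemma Dl_pos x : 0 <= x -> 0 < Dl x.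
Proof. intro. rewrite Dl_eq. destruct q_pos as [? [? ?]]. apply quad_pos; lra. Qed.

Lemma r_pos : 0 < r0 /\ 0 < r1 /\ 0 < r2.
Proof.
  pose proof E1_pos. pose proof E3_pos. unfold r0, r1, r2.
  assert (0 < k*bt1 - k1*bt). { assert (k1*bt < k*bt) by (apply Rmult_lt_compat_r; lra).
    assert (k*bt < k*bt1) by (apply Rmult_lt_compat_l; lra). lra. }
  assert (0 < k*bt2 - k2*bt). { assert (k2*bt < k*bt) by (apply Rmult_lt_compat_r; lra).
    assert (k*bt < k*bt2) by (apply Rmult_lt_compat_l; lra). lra. }
  assert (0 < bt2*(k*bt2+k1*bt2+k1*cm) - k2*E3).
  { unfold E3, e3.
    assert (k2*(bt*bt2) < k*(bt2*bt2)). { apply Rmult_le_0_lt_compat; try nra. }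
    assert (k2*(bt1*bt2) < k1*(bt2*bt2)). { apply Rmult_le_0_lt_compat; try nra. }
    assert (k2*(bt1*cm) < k1*(bt2*cm)). { apply Rmult_le_0_lt_compat; try nra. }
    nra. }
  repeat split.
  all: repeat apply Rmult_lt_0_compat; try lra; try (apply pow_lt; lra).
Qed.

Lemma NN_diff x y : 0 <= x -> 0 <= y -> NN y - NN x = (x - y) * rhoN x y.
Proof.
  intros hx hy. pose proof (Dl_pos x hx). pose proof (Dl_pos y hy).
  unfold NN, rhoN, Nfun, r0, r1, r2, E1, E3. unfold Dl in *. unfold e2.
  unfold Defs.Delta, e1, e3 in *. field. split; lra.
Qed.

Lemma rhoN_bound x y : 0 <= x -> 0 <= y -> 0 < rhoN x y <= LamN.
Proof.
  intros hx hy. pose proof (Dl_pos x hx). pose proof (Dl_pos y hy).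
  destruct r_pos as [h0 [h1 h2]]. destruct q_pos as [g0 [g1 g2]].
  split.
  - unfold rhoN. apply Rdiv_lt_0_compat; [|apply Rmult_lt_0_compat; lra].
    assert (0 <= r1*(x+y)) by (apply Rmult_le_pos; lra).
    assert (0 <= r2*x*y) by (apply Rmult_le_pos; [apply Rmult_le_pos|]; lra). lra.
  - replace (rhoN x y) with (r0 * (1/Dl x) * (1/Dl y) + r1 * ((x / Dl x) * (1/Dl y))
                  + r1 * ((y / Dl y) * (1 / Dl x)) + r2 * ((x/Dl x) * (y / Dl y)))
      by (unfold rhoN; field; split; lra).
    pose proof (quad_inv_bound q0 q1 q2 x g0 (Rlt_le _ _ g1) g2 hx) as bx.
    pose proof (quad_inv_bound q0 q1 q2 y g0 (Rlt_le _ _ g1) g2 hy) as by_.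
    pose proof (quad_lin_bound q0 q1 q2 x g0 (Rlt_le _ _ g1) g2 hx) as lx.
    pose proof (quad_lin_bound q0 q1 q2 y g0 (Rlt_le _ _ g1) g2 hy) as ly.
    rewrite <- Dl_eq in bx, by_, lx, ly.
    assert (A1 : 1 / Dl x * (1 / Dl y) <= 1/q0 * (1/q0)) by (apply prod_le; lra).
    assert (A2 : x / Dl x * (1 / Dl y) <= (1/q0 + 1/q2) * (1/q0)) by (apply prod_le; lra).
    assert (A3 : y / Dl y * (1 / Dl x) <= (1/q0 + 1/q2) * (1/q0)) by (apply prod_le; lra).
    assert (A4 : x / Dl x * (y / Dl y) <= (1/q0 + 1/q2) * (1/q0 + 1/q2)) by (apply prod_le; lra).
    apply Rmult_le_compat_l with (r := r0) in A1; [|lra].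
    apply Rmult_le_compat_l with (r := r1) in A2; [|lra].
    apply Rmult_le_compat_l with (r := r1) in A3; [|lra].
    apply Rmult_le_compat_l with (r := r2) in A4; [|lra].
    unfold LamN. rewrite Rmult_assoc. lra.
Qed.

Lemma NN_bound x : 0 <= x -> 0 < NN x <= k / bt.
Proof.
  intro hx. split.
  - unfold NN, Nfun. apply Rdiv_lt_0_compat; [|apply (Dl_pos x hx)].
    pose proof E1_pos. unfold E1 in *. unfold e2.
    assert (0 <= bt2*c*x) by (repeat apply Rmult_le_pos; lra).
    assert (0 < k*(bt2*c*x + e1 bt bt1 bt2 c cm)) by (apply Rmult_lt_0_compat; lra).
    assert (0 <= k1 * (c * (bt2 + cm)) * x) by (repeat apply Rmult_le_pos; lra).
    assert (0 <= k2 * c^2 * x^2) by (repeat apply Rmult_le_pos; try lra; apply pow2_ge_0).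
    lra.
  - pose proof (NN_diff x 0 hx (Rle_refl 0)) as H.
    pose proof (rhoN_bound x 0 hx (Rle_refl 0)) as [H1 _].
    assert (NN 0 = k / bt).
    { pose proof E1_pos. unfold NN, Nfun, Defs.Delta. unfold E1 in *. field. split; lra. }
    assert (0 <= (x - 0) * rhoN x 0) by (apply Rmult_le_pos; lra). lra.
Qed.

End NS.

Lemma sq_pos (x A : R) : 0 < A -> 0 < x^2 + A.
Proof. intro. pose proof (pow2_ge_0 x). lra. Qed.

Lemma Rabs_le_of (r M : R) : -M <= r <= M -> Rabs r <= M.
Proof. intros. apply Rabs_le. lra. Qed.

Lemma comp13 (C As Az bm : R) : 0 < C -> 0 < As -> 0 < Az -> 0 < bm ->
  exists L, 0 <= L /\ forall a1 b1 d1 a2 b2 d2, 0 < b1 -> 0 < d1 -> 0 < b2 -> 0 < d2 ->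
  exists pp qq rr, 0 < pp <= L /\ 0 < qq <= L /\ Rabs rr <= L /\
   (C / ((b2^2+As)*(d2^2+Az)) - bm*a2) - (C / ((b1^2+As)*(d1^2+Az)) - bm*a1)
     = pp*(b1-b2) + qq*(d1-d2) + rr*(a2-a1).
Proof.
  intros hC hAs hAz hbm.
  assert (hl1 : 0 < Lamf As) by (unfold Lamf; assert (0 < 1/As) by (apply Rdiv_lt_0_compat; lra); nra).
  assert (hl2 : 0 < Lamf Az) by (unfold Lamf; assert (0 < 1/Az) by (apply Rdiv_lt_0_compat; lra); nra).
  assert (0 < 1/As) by (apply Rdiv_lt_0_compat; lra). assert (0 < 1/Az) by (apply Rdiv_lt_0_compat; lra).
  set (L1 := C * Lamf As * (1/Az)). set (L2 := C * (1/As) * Lamf Az).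
  assert (0 < L1) by (unfold L1; repeat apply Rmult_lt_0_compat; lra).
  assert (0 < L2) by (unfold L2; repeat apply Rmult_lt_0_compat; lra).
  exists (L1 + L2 + bm). split; [lra|].
  intros a1 b1 d1 a2 b2 d2 hb1 hd1 hb2 hd2.
  exists (C * rhof As b1 b2 * fK Az d2), (C * fK As b1 * rhof Az d1 d2), (- bm).
  pose proof (rhof_bound As b1 b2 hAs hb1 hb2). pose proof (rhof_bound Az d1 d2 hAz hd1 hd2).
  pose proof (fK_bound Az d2 hAz (Rlt_le _ _ hd2)). pose proof (fK_bound As b1 hAs (Rlt_le _ _ hb1)).
  assert (P1 : C * rhof As b1 b2 * fK Az d2 <= L1).
  { unfold L1. apply prod_le; split; try lra.
    apply Rmult_le_pos; lra. apply prod_le; lra. }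
  assert (P2 : C * fK As b1 * rhof Az d1 d2 <= L2).
  { unfold L2. apply prod_le; split; try lra.
    apply Rmult_le_pos; lra. apply prod_le; lra. }
  assert (0 < C * rhof As b1 b2 * fK Az d2) by (apply Rmult_lt_0_compat; [apply Rmult_lt_0_compat|]; lra).
  assert (0 < C * fK As b1 * rhof Az d1 d2) by (apply Rmult_lt_0_compat; [apply Rmult_lt_0_compat|]; lra).
  repeat split; try lra.
  - apply Rabs_le_of. lra.
  - pose proof (sq_pos b1 As hAs). pose proof (sq_pos b2 As hAs).
    pose proof (sq_pos d1 Az hAz). pose proof (sq_pos d2 Az hAz).
    unfold rhof, fK. field. repeat split; lra.
Qed.

Lemma J_bound (A x : R) : 0 < A -> 0 < x -> 0 < x^2 / (x^2 + A) <= 1.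
Proof.
  intros hA hx. pose proof (sq_pos x A hA). assert (0 < x^2) by (apply pow_lt; lra). split.
  apply Rdiv_lt_0_compat; lra. apply div_le_b; lra.
Qed.

Section NP.
Variables bt bt1 bt2 c cm k k1 k2 : R.
Hypotheses (hbt : 0 < bt) (hbt1 : bt < bt1) (hbt2 : bt1 < bt2) (hc : 0 < c) (hcm : 0 < cm)
  (hk2 : 0 < k2) (hk1 : k2 < k1) (hk : k1 < k).
Let N := NN bt bt1 bt2 c cm k k1 k2.
Let rho := rhoN bt bt1 bt2 c cm k k1 k2.
Let LN := LamN bt bt1 bt2 c cm k k1 k2.

Lemma Nb x : 0 <= x -> 0 < N x <= k / bt.
Proof. apply NN_bound; auto. Qed.
Lemma rb x y : 0 <= x -> 0 <= y -> 0 < rho x y <= LN.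
Proof. apply rhoN_bound; auto. Qed.
Lemma Nd x y : 0 <= x -> 0 <= y -> N y - N x = (x - y) * rho x y.
Proof. apply NN_diff; auto. Qed.
Lemma LN_pos : 0 < LN.
Proof. destruct (rb 1 1); lra. Qed.
Lemma M_pos : 0 < k / bt.
Proof. apply Rdiv_lt_0_compat; lra. Qed.

Lemma comp2g (C As km : R) : 0 < C -> 0 < As -> 0 < km ->
  exists L, 0 <= L /\ forall a1 b1 a2 b2, 0 < a1 -> 0 < b1 -> 0 < a2 -> 0 < b2 ->
  exists pp rr, 0 < pp <= L /\ Rabs rr <= L /\
   (C / (b1^2+As) * N a1 - km*b1) - (C / (b2^2+As) * N a2 - km*b2)
     = pp*(a2-a1) + rr*(b1-b2).
Proof.
  intros hC hAs hkm. pose proof LN_pos. pose proof M_pos.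
  assert (hl1 : 0 < Lamf As) by (unfold Lamf; assert (0 < 1/As) by (apply Rdiv_lt_0_compat; lra); nra).
  assert (0 < 1/As) by (apply Rdiv_lt_0_compat; lra).
  set (L1 := C * (1/As) * LN). set (L2 := C * Lamf As * (k/bt) + km).
  assert (0 < L1) by (unfold L1; apply Rmult_lt_0_compat; [apply Rmult_lt_0_compat|]; lra).
  assert (0 < L2) by (unfold L2; assert (0 < C * Lamf As * (k/bt)) by (apply Rmult_lt_0_compat; [apply Rmult_lt_0_compat|]; lra); lra).
  exists (L1 + L2). split; [lra|].
  intros a1 b1 a2 b2 ha1 hb1 ha2 hb2.
  exists (C * fK As b1 * rho a2 a1), (-(C * rhof As b2 b1 * N a2) - km).
  pose proof (rb a2 a1 (Rlt_le _ _ ha2) (Rlt_le _ _ ha1)).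
  pose proof (Nb a2 (Rlt_le _ _ ha2)).
  pose proof (rhof_bound As b2 b1 hAs hb2 hb1). pose proof (fK_bound As b1 hAs (Rlt_le _ _ hb1)).
  assert (P1 : C * fK As b1 * rho a2 a1 <= L1).
  { unfold L1. apply prod_le; split; try lra. apply Rmult_le_pos; lra. apply prod_le; lra. }
  assert (P2 : C * rhof As b2 b1 * N a2 <= C * Lamf As * (k/bt)).
  { apply prod_le; split; try lra. apply Rmult_le_pos; lra. apply prod_le; lra. }
  assert (0 < C * fK As b1 * rho a2 a1) by (apply Rmult_lt_0_compat; [apply Rmult_lt_0_compat|]; lra).
  assert (0 < C * rhof As b2 b1 * N a2) by (apply Rmult_lt_0_compat; [apply Rmult_lt_0_compat|]; lra).
  repeat split; try lra.
  - apply Rabs_le_of. unfold L2 in *. lra.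
  - pose proof (Nd a2 a1 (Rlt_le _ _ ha2) (Rlt_le _ _ ha1)) as HN.
    replace (N a1) with (N a2 + (a2 - a1) * rho a2 a1) by lra.
    pose proof (sq_pos b1 As hAs). pose proof (sq_pos b2 As hAs).
    unfold rhof, fK. field. split; lra.
Qed.

Lemma comp4g (Cz As Az km dz : R) : 0 < Cz -> 0 < As -> 0 < Az -> 0 < km ->
  exists L, 0 <= L /\ forall b1 c1 d1 b2 c2 d2, 0 < b1 -> 0 < c1 -> 0 < d1 -> 0 < b2 -> 0 < c2 -> 0 < d2 ->
  exists pp qq rr, 0 < pp <= L /\ 0 < qq <= L /\ Rabs rr <= L /\
   (dz + Cz * b1^2 * d1^2 / ((b1^2+As)*(d1^2+Az)) * N c1 - km*d1)
   - (dz + Cz * b2^2 * d2^2 / ((b2^2+As)*(d2^2+Az)) * N c2 - km*d2)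
     = pp*(b1-b2) + qq*(c2-c1) + rr*(d1-d2).
Proof.
  intros hC hAs hAz hkm. pose proof LN_pos. pose proof M_pos.
  assert (hl1 : 0 < Lamf As) by (unfold Lamf; assert (0 < 1/As) by (apply Rdiv_lt_0_compat; lra); nra).
  assert (hl2 : 0 < Lamf Az) by (unfold Lamf; assert (0 < 1/Az) by (apply Rdiv_lt_0_compat; lra); nra).
  set (L1 := Cz * As * Lamf As * 1 * (k/bt)).
  set (L2 := Cz * 1 * 1 * LN).
  set (L3 := Cz * 1 * Az * Lamf Az * (k/bt) + km).
  assert (0 < L1) by (unfold L1; repeat (apply Rmult_lt_0_compat; try lra)).
  assert (0 < L2) by (unfold L2; repeat (apply Rmult_lt_0_compat; try lra)).
  assert (0 < L3).
  { unfold L3. assert (0 < Cz * 1 * Az * Lamf Az * (k/bt)) by (repeat (apply Rmult_lt_0_compat; try lra)). lra. }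
  exists (L1 + L2 + L3). split; [lra|].
  intros b1 c1 d1 b2 c2 d2 hb1 hc1 hd1 hb2 hc2 hd2.
  set (J := fun A x => x^2 / (x^2 + A)).
  exists (Cz * As * rhof As b1 b2 * J Az d1 * N c1),
         (Cz * J As b2 * J Az d2 * rho c2 c1),
         (Cz * J As b2 * Az * rhof Az d1 d2 * N c1 - km).
  pose proof (rb c2 c1 (Rlt_le _ _ hc2) (Rlt_le _ _ hc1)).
  pose proof (Nb c1 (Rlt_le _ _ hc1)).
  pose proof (rhof_bound As b1 b2 hAs hb1 hb2). pose proof (rhof_bound Az d1 d2 hAz hd1 hd2).
  pose proof (J_bound Az d1 hAz hd1). pose proof (J_bound Az d2 hAz hd2).
  pose proof (J_bound As b2 hAs hb2).
  assert (HB : 0 < Cz * As * rhof As b1 b2 * J Az d1 * N c1 <= L1 /\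
                0 < Cz * J As b2 * J Az d2 * rho c2 c1 <= L2 /\
                0 <= Cz * J As b2 * Az * rhof Az d1 d2 * N c1 <= Cz * 1 * Az * Lamf Az * (k/bt)).
  { unfold L1, L2.
    unfold J in *.
    set (x1 := rhof As b1 b2) in *. set (x2 := d1 ^ 2 / (d1 ^ 2 + Az)) in *.
    set (x3 := N c1) in *. set (x4 := b2 ^ 2 / (b2 ^ 2 + As)) in *.
    set (x5 := d2 ^ 2 / (d2 ^ 2 + Az)) in *. set (x6 := rho c2 c1) in *.
    set (x7 := rhof Az d1 d2) in *. set (x8 := Lamf As) in *. set (x9 := Lamf Az) in *.
    set (x10 := k / bt) in *. set (x11 := LN) in *.
    clearbody x1 x2 x3 x4 x5 x6 x7 x8 x9 x10 x11.
    repeat split.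
    - repeat (apply Rmult_lt_0_compat; try lra).
    - repeat (apply prod_le; split; try lra; try (repeat (apply Rmult_le_pos; try lra))).
    - repeat (apply Rmult_lt_0_compat; try lra).
    - repeat (apply prod_le; split; try lra; try (repeat (apply Rmult_le_pos; try lra))).
    - repeat (apply Rmult_le_pos; try lra).
    - repeat (apply prod_le; split; try lra; try (repeat (apply Rmult_le_pos; try lra))). }
  destruct HB as [P1 [P2 P3]].
  repeat split; try lra.
  - apply Rabs_le_of. unfold L3 in *. lra.
  - pose proof (Nd c2 c1 (Rlt_le _ _ hc2) (Rlt_le _ _ hc1)) as HN.
    replace (N c1) with (N c2 + (c2 - c1) * rho c2 c1) by lra.
    pose proof (sq_pos b1 As hAs). pose proof (sq_pos b2 As hAs).
    pose proof (sq_pos d1 Az hAz). pose proof (sq_pos d2 Az hAz).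
    unfold J, rhof. field. repeat split; lra.
Qed.

End NP.

Lemma rc_minus (f g : R -> R) : right_cont f 0 -> right_cont g 0 -> right_cont (fun t => f t - g t) 0.
Proof.
  intros Hf Hg eps he.
  destruct (Hf (eps/2)) as [d1 [hd1 D1]]; [lra|]. destruct (Hg (eps/2)) as [d2 [hd2 D2]]; [lra|].
  exists (Rmin d1 d2). split. apply Rmin_glb_lt; auto.
  intros t ht. pose proof (Rmin_l d1 d2). pose proof (Rmin_r d1 d2).
  assert (a1: Rabs (f t - f 0) < eps/2) by (apply D1; lra).
  assert (a2: Rabs (g t - g 0) < eps/2) by (apply D2; lra).
  apply Rabs_def2 in a1. apply Rabs_def2 in a2. apply Rabs_def1; lra.
Qed.

Lemma sol_pos (p : params) (Hp : valid_params p) (T : R) (a b c d : R -> R) :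
  is_solution p T a b c d -> in_open_orthant (a 0) (b 0) (c 0) (d 0) ->
  forall t, 0 < t < T -> 0 < a t /\ 0 < b t /\ 0 < c t /\ 0 < d t.
Proof.
  destruct Hp as (hAs & hAz & hE34 & hE200 & hES & hEZ & hb34 & hbm34 & hb200 & hbm200 & hgs & hgz & hcs & hcms & hcz & hcmz & hbs & hbs1 & hbs2 & hbz & hbz1 & hbz2 & hks & hks1 & hks2 & hkms & hkz & hkz1 & hkz2 & hkmz & hdz & [hbs01 hbs12] & [hbz01 hbz12] & hks1k & hks21 & hkz1k & hkz21).
  intros [ra [rb [rc [rd HD]]]] [pa [pb [pc pd]]].
  assert (Ha : forall t, 0 < t < T -> 0 < a t).
  { apply (pos_keep a (fun t => G_mu34 p (a t) (b t) (c t) (d t)) (b_m34 p) T ra pa).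
    intros t ht. split. apply (HD t ht).
    unfold G_mu34. pose proof (sq_pos (b t) _ hAs). pose proof (sq_pos (d t) _ hAz).
    assert (0 < b_34 p * E_34 p * A_s p * A_z p / ((b t ^ 2 + A_s p) * (d t ^ 2 + A_z p))).
    { apply Rdiv_lt_0_compat. repeat (apply Rmult_lt_0_compat; try lra). apply Rmult_lt_0_compat; lra. }
    lra. }
  assert (Hc : forall t, 0 < t < T -> 0 < c t).
  { apply (pos_keep c (fun t => G_mu200 p (a t) (b t) (c t) (d t)) (b_m200 p) T rc pc).
    intros t ht. split. apply (HD t ht).
    unfold G_mu200. pose proof (sq_pos (b t) _ hAs). pose proof (sq_pos (d t) _ hAz).
    assert (0 < b_200 p * E_200 p * A_s p * A_z p / ((b t ^ 2 + A_s p) * (d t ^ 2 + A_z p))).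
    { apply Rdiv_lt_0_compat. repeat (apply Rmult_lt_0_compat; try lra). apply Rmult_lt_0_compat; lra. }
    lra. }
  assert (Hb : forall t, 0 < t < T -> 0 < b t).
  { apply (pos_keep b (fun t => G_s p (a t) (b t) (c t) (d t)) (k_ms p) T rb pb).
    intros t ht. split. apply (HD t ht).
    unfold G_s. pose proof (sq_pos (b t) _ hAs).
    pose proof (NN_bound (b_s p) (b_s1 p) (b_s2 p) (c_s p) (c_ms p) (k_s p) (k_s1 p) (k_s2 p)
                  hbs hbs01 hbs12 hcs hcms hks2 hks21 hks1k (a t) (Rlt_le _ _ (Ha t ht))) as [hN _].
    unfold NN in hN. unfold N_s.
    assert (0 < g_s p * E_S p * A_s p / (b t ^ 2 + A_s p)).
    { apply Rdiv_lt_0_compat. repeat (apply Rmult_lt_0_compat; try lra). lra. }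
    assert (0 < g_s p * E_S p * A_s p / (b t ^ 2 + A_s p) *
         Nfun (b_s p) (b_s1 p) (b_s2 p) (c_s p) (c_ms p) (k_s p) (k_s1 p) (k_s2 p) (a t))
      by (apply Rmult_lt_0_compat; lra).
    lra. }
  assert (Hd : forall t, 0 < t < T -> 0 < d t).
  { apply (pos_keep d (fun t => G_z p (a t) (b t) (c t) (d t)) (k_mz p) T rd pd).
    intros t ht. split. apply (HD t ht).
    unfold G_z. pose proof (sq_pos (b t) _ hAs). pose proof (sq_pos (d t) _ hAz).
    pose proof (NN_bound (b_z p) (b_z1 p) (b_z2 p) (c_z p) (c_mz p) (k_z p) (k_z1 p) (k_z2 p)
                  hbz hbz01 hbz12 hcz hcmz hkz2 hkz21 hkz1k (c t) (Rlt_le _ _ (Hc t ht))) as [hN _].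
    unfold NN in hN. unfold N_z.
    assert (0 <= g_z p * E_Z p * b t ^ 2 * d t ^ 2 / ((b t ^ 2 + A_s p) * (d t ^ 2 + A_z p))).
    { apply div_nonneg. pose proof (pow2_ge_0 (b t)). pose proof (pow2_ge_0 (d t)).
      apply Rmult_le_pos; [apply Rmult_le_pos; [apply Rmult_le_pos|]|]; lra. apply Rmult_lt_0_compat; lra. }
    assert (0 <= g_z p * E_Z p * b t ^ 2 * d t ^ 2 / ((b t ^ 2 + A_s p) * (d t ^ 2 + A_z p)) *
         Nfun (b_z p) (b_z1 p) (b_z2 p) (c_z p) (c_mz p) (k_z p) (k_z1 p) (k_z2 p) (c t))
      by (apply Rmult_le_pos; lra).
    lra. }
  intros t ht. repeat split; auto.
Qed.

Theorem mainTheorem4 (p : params) (Hp : valid_params p) (T : R)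
  (x1a x1b x1c x1d x2a x2b x2c x2d : R -> R) :
  is_solution p T x1a x1b x1c x1d ->
  is_solution p T x2a x2b x2c x2d ->
  in_open_orthant (x1a 0) (x1b 0) (x1c 0) (x1d 0) ->
  in_open_orthant (x2a 0) (x2b 0) (x2c 0) (x2d 0) ->
  in_Csigma (x1a 0 - x2a 0) (x1b 0 - x2b 0) (x1c 0 - x2c 0) (x1d 0 - x2d 0) ->
  (x1a 0, x1b 0, x1c 0, x1d 0) <> (x2a 0, x2b 0, x2c 0, x2d 0) ->
  forall t, 0 < t < T ->
    in_int_Csigma (x1a t - x2a t) (x1b t - x2b t) (x1c t - x2c t) (x1d t - x2d t).
Proof.
  intros S1 S2 O1 O2 HC Hne.
  pose proof (sol_pos p Hp T _ _ _ _ S1 O1) as Q1.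
  pose proof (sol_pos p Hp T _ _ _ _ S2 O2) as Q2.
  pose proof Hp as Hp'.
  destruct Hp' as (hAs & hAz & hE34 & hE200 & hES & hEZ & hb34 & hbm34 & hb200 & hbm200 & hgs & hgz & hcs & hcms & hcz & hcmz & hbs & hbs1 & hbs2 & hbz & hbz1 & hbz2 & hks & hks1 & hks2 & hkms & hkz & hkz1 & hkz2 & hkmz & hdz & [hbs01 hbs12] & [hbz01 hbz12] & hks1k & hks21 & hkz1k & hkz21).
  destruct (comp13 (b_34 p * E_34 p * A_s p * A_z p) (A_s p) (A_z p) (b_m34 p)) as [L1 [hL1 C1]];
    try lra. repeat (apply Rmult_lt_0_compat; try lra).
  destruct (comp13 (b_200 p * E_200 p * A_s p * A_z p) (A_s p) (A_z p) (b_m200 p)) as [L3 [hL3 C3]];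
    try lra. repeat (apply Rmult_lt_0_compat; try lra).
  destruct (comp2g (b_s p) (b_s1 p) (b_s2 p) (c_s p) (c_ms p) (k_s p) (k_s1 p) (k_s2 p)
              hbs hbs01 hbs12 hcs hcms hks2 hks21 hks1k
              (g_s p * E_S p * A_s p) (A_s p) (k_ms p)) as [L2 [hL2 C2]]; try lra.
    repeat (apply Rmult_lt_0_compat; try lra).
  destruct (comp4g (b_z p) (b_z1 p) (b_z2 p) (c_z p) (c_mz p) (k_z p) (k_z1 p) (k_z2 p)
              hbz hbz01 hbz12 hcz hcmz hkz2 hkz21 hkz1k
              (g_z p * E_Z p) (A_s p) (A_z p) (k_mz p) (d_z p)) as [L4 [hL4 C4]]; try lra.
    repeat (apply Rmult_lt_0_compat; try lra).
  set (L := L1 + L2 + L3 + L4).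
  destruct S1 as [ra1 [rb1 [rc1 [rd1 D1]]]]. destruct S2 as [ra2 [rb2 [rc2 [rd2 D2]]]].
  unfold in_Csigma in HC.
  assert (Hpos : 0 < x2a 0 - x1a 0 \/ 0 < x1b 0 - x2b 0 \/ 0 < x2c 0 - x1c 0 \/ 0 < x1d 0 - x2d 0).
  { destruct (Req_dec (x2a 0) (x1a 0)) as [e1|e1]; [|left; lra].
    destruct (Req_dec (x2b 0) (x1b 0)) as [e2|e2]; [|right; left; lra].
    destruct (Req_dec (x2c 0) (x1c 0)) as [e3|e3]; [|right; right; left; lra].
    destruct (Req_dec (x2d 0) (x1d 0)) as [e4|e4]; [|right; right; right; lra].
    exfalso. apply Hne. rewrite e1, e2, e3, e4. reflexivity. }
  assert (HS : forall t, 0 < t < T -> 0 < x2a t - x1a t /\ 0 < x1b t - x2b t /\ 0 < x2c t - x1c t /\ 0 < x1d t - x2d t).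
  apply (strong_abs
    (fun s => x2a s - x1a s) (fun s => x1b s - x2b s) (fun s => x2c s - x1c s) (fun s => x1d s - x2d s)
    (fun s => G_mu34 p (x2a s) (x2b s) (x2c s) (x2d s) - G_mu34 p (x1a s) (x1b s) (x1c s) (x1d s))
    (fun s => G_s p (x1a s) (x1b s) (x1c s) (x1d s) - G_s p (x2a s) (x2b s) (x2c s) (x2d s))
    (fun s => G_mu200 p (x2a s) (x2b s) (x2c s) (x2d s) - G_mu200 p (x1a s) (x1b s) (x1c s) (x1d s))
    (fun s => G_z p (x1a s) (x1b s) (x1c s) (x1d s) - G_z p (x2a s) (x2b s) (x2c s) (x2d s))
    L T).
  - unfold L; lra.
  - apply rc_minus; auto.
  - apply rc_minus; auto.
  - apply rc_minus; auto.
  - apply rc_minus; auto.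
  - simpl. lra.
  - simpl. lra.
  - simpl. lra.
  - simpl. lra.
  - exact Hpos.
  - intros s hs. destruct (D1 s hs) as [d1a [d1b [d1c d1d]]]. destruct (D2 s hs) as [d2a [d2b [d2c d2d]]].
    repeat split; apply derivable_pt_lim_minus; auto.
  - intros s hs. destruct (Q1 s hs) as [a1 [b1 [c1 e1]]]. destruct (Q2 s hs) as [a2 [b2 [c2 e2]]].
    repeat split.
    + destruct (C1 (x1a s) (x1b s) (x1d s) (x2a s) (x2b s) (x2d s)) as [pp [qq [rr [h1 [h2 [h3 h4]]]]]]; auto.
      exists pp, qq, rr. unfold G_mu34. unfold L. repeat split; try lra.
    + destruct (C2 (x1a s) (x1b s) (x2a s) (x2b s)) as [pp [rr [h1 [h2 h4]]]]; auto.
      exists pp, rr. unfold G_s, N_s. unfold L. repeat split; try lra. unfold NN in h4; lra.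
    + destruct (C3 (x1c s) (x1b s) (x1d s) (x2c s) (x2b s) (x2d s)) as [pp [qq [rr [h1 [h2 [h3 h4]]]]]]; auto.
      exists pp, qq, rr. unfold G_mu200. unfold L. repeat split; try lra.
    + destruct (C4 (x1b s) (x1c s) (x1d s) (x2b s) (x2c s) (x2d s)) as [pp [qq [rr [h1 [h2 [h3 h4]]]]]]; auto.
      exists pp, qq, rr. unfold G_z, N_z. unfold L. repeat split; try lra. unfold NN in h4; lra.
  - intros t ht. destruct (HS t ht) as [u1 [u2 [u3 u4]]].
    unfold in_int_Csigma. repeat split; lra.
Qed.
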